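(* Consider the vector adoption–opinion model described in the context, with initial opinion vector $x(0)\in[0,1]^n$ treated as a fixed parameter, and suppose Assumptions 1 and 2 (stated in the context) hold. Let $x^*=(I-\Lambda\tilde W)^{-1}(I-\Lambda-\Xi)x(0)$ and $d^*=\Psi(x^* )\mathbf 1$. Then $(\mathbf 0,d^*,x^* )$ is an equilibrium (fixed point) of the map defining the model.
   Context: Let $n\ge1$, $\mathcal V=\{1,\dots,n\}$, $W,\tilde W\in\mathbb R_+^{n\times n}$ nonnegative, and for each $i$: $\beta_i,\gamma_i,\theta_i,\delta_i\in[0,1]$, $\alpha_i,\lambda_i,\xi_i\ge0$ with $\alpha_i+\lambda_i+\xi_i=1$. Let $B=\mathrm{diag}(\beta)$, $\Gamma=\mathrm{diag}(\gamma)$, $\Theta=\mathrm{diag}(\theta)$, $\Delta=\mathrm{diag}(\delta)$, $\Lambda=\mathrm{diag}(\lambda)$, $\Xi=\mathrm{diag}(\xi)$. The vector adoption–opinion model on the state $(a,d,x)\in([0,1]^n)^3$ is $a(t+1)=a(t)+B\,\mathrm{diag}(x(t))\,\mathrm{diag}(\mathbf 1-a(t)-d(t))\,W a(t)-\Delta a(t)$, $d(t+1)=d(t)-\Gamma\,\mathrm{diag}(x(t))d(t)+\Delta a(t)+\Theta(I-\mathrm{diag}(x(t)))(\mathbf 1-a(t)-d(t))$, $x(t+1)=(I-\Lambda-\Xi)x(0)+\Lambda\tilde W x(t)+\Xi W a(t)$, where $x(0)$ is the (fixed) initial opinion vector. Define $\Psi(x):=\big((\Gamma-\Theta)\mathrm{diag}(x)+\Theta\big)^{-1}\Theta(I-\mathrm{diag}(x))$.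 Assumption 1: $W$ and $\tilde W$ are row-stochastic and irreducible, and $\gamma_i+\theta_i\in(0,1)$ for all $i$. Assumption 2: letting $\tilde{\mathcal G}$ be the directed graph on $\mathcal V$ with an edge $(i,j)$ iff $\tilde W_{ij}>0$, for every $i\in\mathcal V$ there is a path in $\tilde{\mathcal G}$ from $i$ to some $j$ with $\alpha_j=1-\lambda_j-\xi_j>0$. *)

(* Defs.v *)
From HB Require Import structures.
From mathcomp Require Import all_boot all_order all_algebra.
Set Implicit Arguments. Unset Strict Implicit. Unset Printing Implicit Defensive.
Import Order.TTheory GRing.Theory Num.Theory.
Local Open Scope ring_scope.

Section Model.
Variables (R : realFieldType) (n : nat).

Definition dg (v : 'I_n -> R) : 'M[R]_n := diag_mx (\row_i v i).
Definition dgc (x : 'cV[R]_n) : 'M[R]_n := diag_mx x^T.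

Definition ones : 'cV[R]_n := const_mx 1.

Definition row_stochastic (W : 'M[R]_n) : Prop :=
  (forall i j, 0 <= W i j) /\ (forall i, \sum_j W i j = 1).

Definition mx_graph (A : 'M[R]_n) : rel 'I_n := fun i j => 0 < A i j.

Definition irreducible_mx (A : 'M[R]_n) : Prop :=
  forall i j, connect (mx_graph A) i j.

Definition Psi_den (gamma theta : 'I_n -> R) (x : 'cV[R]_n) : 'M[R]_n :=
  (dg gamma - dg theta) *m dgc x + dg theta.
Definition Psi (gamma theta : 'I_n -> R) (x : 'cV[R]_n) : 'M[R]_n :=
  invmx (Psi_den gamma theta x) *m dg theta *m (1%:M - dgc x).

Definition model_step (W Wt : 'M[R]_n)
    (beta gamma theta delta lambda xi : 'I_n -> R) (x0 : 'cV[R]_n)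
    (s : 'cV[R]_n * 'cV[R]_n * 'cV[R]_n) : 'cV[R]_n * 'cV[R]_n * 'cV[R]_n :=
  let: (a, d, x) := s in
  (a + dg beta *m dgc x *m dgc (ones - a - d) *m W *m a - dg delta *m a,
   d - dg gamma *m dgc x *m d + dg delta *m a
     + dg theta *m (1%:M - dgc x) *m (ones - a - d),
   (1%:M - dg lambda - dg xi) *m x0 + dg lambda *m Wt *m x + dg xi *m W *m a).

End Model.
Arguments ones {R n}.

(* Main.v *)
Require Import Defs.
From HB Require Import structures.
From mathcomp Require Import all_boot all_order all_algebra.
From mathcomp Require Import lra.
Import Order.TTheory GRing.Theory Num.Theory.
Local Open Scope ring_scope.

Lemma ker_trivial (R : realFieldType) (n : nat) (Wt : 'M[R]_n)
    (alpha lambda xi : 'I_n -> R) (v : 'cV[R]_n) :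
  (forall i, 0 <= alpha i) -> (forall i, 0 <= lambda i) -> (forall i, 0 <= xi i) ->
  (forall i, alpha i + lambda i + xi i = 1) ->
  row_stochastic Wt ->
  (forall i, exists j, connect (mx_graph Wt) i j /\ 0 < alpha j) ->
  (1%:M - dg lambda *m Wt) *m v = 0 -> v = 0.
Proof.
move=> ha hla hxi hs [Wge0 Wsum] hA hv.
have ev i : v i 0 = lambda i * \sum_j Wt i j * v j 0.
  move: hv; rewrite mulmxBl mul1mx => /eqP; rewrite subr_eq0 => /eqP hv.
  rewrite {1}hv -mulmxA /dg mul_diag_mx !mxE mulr_sumr.
  by [].
apply/matrixP => i j; rewrite (ord1 j) mxE.
apply/eqP; apply/negPn/negP => vi0.
pose F : 'I_n -> R := fun k => `|v k 0|.
pose m := [arg max_(k > i) F k]%O.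
have mmax k : F k <= F m.
  rewrite /m; case: arg_maxP => // l _ H; exact: H.
have Mpos : 0 < F m by apply: lt_le_trans (mmax i); rewrite normr_gt0.
pose P k := F m <= F k.
have step k : P k -> alpha k <= 0 /\ (forall l, 0 < Wt k l -> P l).
  move=> Pk.
  have hS : \sum_l Wt k l * F l <= F m.
    apply: le_trans (_ : \sum_l Wt k l * F m <= _).
      by apply: ler_sum => l _; apply: ler_wpM2l.
    by rewrite -mulr_suml Wsum mul1r.
  have hn : F k <= `|lambda k| * \sum_l Wt k l * F l.
    rewrite /F ev normrM ler_wpM2l //.
    apply: le_trans (ler_norm_sum _ _ _) _.
    by apply: ler_sum => l _; rewrite normrM ger0_norm.
  have lk1 : lambda k <= 1.
    have := hs k; have := ha k; have := hxi k; lra.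
  have hl : 1 <= `|lambda k|.
    have : F m <= `|lambda k| * F m.
      apply: le_trans Pk _; apply: le_trans hn _.
      by apply: ler_wpM2l.
    by rewrite -{1}[F m]mul1r ler_pM2r.
  have lk : lambda k = 1.
    by apply/eqP; rewrite eq_le lk1 /=; rewrite ger0_norm in hl.
  split.
    have := hs k; have := hxi k; rewrite lk; lra.
  have hS2 : F m <= \sum_l Wt k l * F l.
    by apply: le_trans Pk _; apply: le_trans hn _; rewrite lk normr1 mul1r.
  have h0 : \sum_l Wt k l * (F m - F l) = 0.
    apply/eqP; rewrite eq_le; apply/andP; split.
      under eq_bigr => l _ do rewrite mulrBr.
      by rewrite sumrB -mulr_suml Wsum mul1r subr_le0.
    by apply: sumr_ge0 => l _; rewrite mulr_ge0 // subr_ge0.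
  move=> l hkl.
  have hF : forall l, xpredT l -> 0 <= Wt k l * (F m - F l).
    by move=> l' _; rewrite mulr_ge0 // subr_ge0.
  have := @psumr_eq0P _ _ _ _ hF h0 l isT.
  move/eqP; rewrite mulf_eq0 => /orP [/eqP hw|]; first by rewrite hw ltxx in hkl.
  by rewrite subr_eq0 /P => /eqP ->.
have Hp : forall p x, P x -> path (mx_graph Wt) x p -> P (last x p).
  elim=> [|y p IH] x //= Px /andP [exy hp].
  by apply: (IH y) => //; have [_ H] := step x Px; exact: H.
have [jj [/connectP [p hp ejj] haj]] := hA m.
have := Hp p m (lexx _) hp; rewrite -ejj => /step [+ _]; lra.
Qed.

Lemma unit_IL (R : realFieldType) (n : nat) (Wt : 'M[R]_n)
    (alpha lambda xi : 'I_n -> R) :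
  (forall i, 0 <= alpha i) -> (forall i, 0 <= lambda i) -> (forall i, 0 <= xi i) ->
  (forall i, alpha i + lambda i + xi i = 1) ->
  row_stochastic Wt ->
  (forall i, exists j, connect (mx_graph Wt) i j /\ 0 < alpha j) ->
  (1%:M - dg lambda *m Wt) \in unitmx.
Proof.
move=> ha hla hxi hs hW hA.
rewrite -unitmx_tr -row_free_unit -kermx_eq0; apply/eqP/row_matrixP => i.
rewrite row0.
have /sub_kermxP h := row_sub i (kermx (1%:M - dg lambda *m Wt)^T).
have h' : (1%:M - dg lambda *m Wt) *m (row i (kermx (1%:M - dg lambda *m Wt)^T))^T = 0.
  by rewrite -[_ *m _^T]trmxK trmx_mul trmxK h trmx0.
have := @ker_trivial R n Wt alpha lambda xi _ ha hla hxi hs hW hA h'.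
by move/(congr1 trmx); rewrite trmxK trmx0.
Qed.

Theorem proposition2 (R : realFieldType) (n : nat) (W Wt : 'M[R]_n)
    (beta gamma theta delta alpha lambda xi : 'I_n -> R) (x0 : 'cV[R]_n) :
  (* parameter ranges *)
  (forall i, 0 <= beta i <= 1) ->
  (forall i, 0 <= gamma i <= 1) ->
  (forall i, 0 <= theta i <= 1) ->
  (forall i, 0 <= delta i <= 1) ->
  (forall i, 0 <= alpha i) -> (forall i, 0 <= lambda i) -> (forall i, 0 <= xi i) ->
  (forall i, alpha i + lambda i + xi i = 1) ->
  (* initial opinions in [0,1]^n *)
  (forall i, 0 <= x0 i ord0 <= 1) ->
  (* Assumption 1 *)
  row_stochastic W -> irreducible_mx W ->
  row_stochastic Wt -> irreducible_mx Wt ->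
  (forall i, 0 < gamma i + theta i < 1) ->
  (* Assumption 2 *)
  (forall i, exists j, connect (mx_graph Wt) i j /\ 0 < alpha j) ->
  let xstar := invmx (1%:M - dg lambda *m Wt) *m ((1%:M - dg lambda - dg xi) *m x0) in
  (* Psi at xstar is well defined *)
  Psi_den gamma theta xstar \in unitmx ->
  let dstar := Psi gamma theta xstar *m ones in
  model_step W Wt beta gamma theta delta lambda xi x0 (0, dstar, xstar)
    = (0, dstar, xstar).
Proof.
move=> hb hg ht hd ha hla hxi hs hx0 hW _ hWt _ hgt hA xstar hU dstar.
have hI := @unit_IL R n Wt alpha lambda xi ha hla hxi hs hWt hA.
rewrite /model_step; congr (_, _, _).
- by rewrite !mulmx0 addr0 subr0.
- rewrite !mulmx0 addr0 !subr0 /dstar /Psi.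
  apply/eqP; rewrite -subr_eq0; apply/eqP.
  set X := dgc xstar.
  have hPd : Psi_den gamma theta xstar *m (invmx (Psi_den gamma theta xstar) *m dg theta *m (1%:M - X) *m ones) = dg theta *m (1%:M - X) *m ones.
    by rewrite !mulmxA mulmxV // mul1mx.
  move: hPd; rewrite /Psi_den -/X.
  set d := invmx _ *m _ *m _ *m ones => hPd.
  rewrite [dg theta *m (1%:M - X)]mulmxBr mulmx1 in hPd *.
  rewrite mulmxBr -hPd !mulmxDl mulNmx.
  set a := dg gamma *m X *m d; set b := dg theta *m X *m d; set c := dg theta *m d.
  apply/matrixP => i j; rewrite !mxE; lra.
- rewrite !mulmx0 addr0 /xstar.
  set c := (1%:M - dg lambda - dg xi) *m x0.
  have hx : (1%:M - dg lambda *m Wt) *m (invmx (1%:M - dg lambda *m Wt) *m c) = c.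
    by rewrite mulmxA mulmxV // mul1mx.
  move: hx; rewrite mulmxBl mul1mx.
  set y := invmx _ *m c; set L := dg lambda *m Wt *m y => hx.
  rewrite -hx; apply/matrixP => i j; rewrite !mxE; lra.
Qed.
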